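(* For integers $n,r$ with $3\le r\le n-3$, there is no graph $H$ with $\mathsf{TS}_2(H)\cong J(n,r)$; that is, $2\notin\mathcal{K}^{\mathsf{TS}}(J(n,r))$.
   Context: All graphs are finite, simple, undirected. A $k$-clique of a graph $H$ is a set of $k$ pairwise adjacent vertices. For a graph $H$ and integer $k\ge1$, the Token Sliding graph $\mathsf{TS}_k(H)$ has as vertices the $k$-cliques of $H$, and two $k$-cliques $A,B$ are adjacent iff $A\setminus B=\{u\}$, $B\setminus A=\{v\}$ for some vertices $u,v$ with $uv\in E(H)$. $\mathcal{K}^{\mathsf{TS}}(G)=\{k\ge1:\ \exists H,\ \mathsf{TS}_k(H)\cong G\}$. The Johnson graph $J(n,r)$ has as vertices the $r$-subsets of $\{1,\dots,n\}$, two being adjacent iff their intersection has size $r-1$. *)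

(* Defs.v *)
From mathcomp Require Import all_boot.
Set Implicit Arguments. Unset Strict Implicit. Unset Printing Implicit Defensive.

(* A (finite simple) graph is given by a vertex finType T and an edge relation
   e : rel T assumed symmetric and irreflexive. *)

Definition is_clique (T : finType) (e : rel T) (A : {set T}) : bool :=
  [forall u in A, forall v in A, (u != v) ==> e u v].

Definition is_kclique (T : finType) (e : rel T) (k : nat) (A : {set T}) : bool :=
  (#|A| == k) && is_clique e A.

Definition ts_adj (T : finType) (e : rel T) (A B : {set T}) : bool :=
  [exists u : T, exists v : T,
     [&& A :\: B == [set u], B :\: A == [set v] & e u v]].

Definition johnson_vertex (n r : nat) (A : {set 'I_n}) : bool := #|A| == r.
Definition johnson_adj (n r : nat) (A B : {set 'I_n}) : bool := #|A :&: B| == r.-1.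

Definition graph_iso (V W : finType) (P : pred V) (eV : rel V)
    (Q : pred W) (eW : rel W) : Prop :=
  exists f : V -> W,
    [/\ (forall x, P x -> Q (f x)),
        {in P &, injective f},
        (forall y, Q y -> exists2 x, P x & f x = y) &
        {in P &, forall x y, eV x y = eW (f x) (f y)}].

(* Main.v *)
Require Import Defs.
From mathcomp Require Import all_boot zify.

Lemma U1I (T : finType) (S A : {set T}) (w : T) :
  S \subset A -> w \notin A -> (w |: S) :&: A = S.
Proof.
move=> sSA wA; apply/setP=> x; rewrite !inE.
move: (subsetP sSA x); case: eqP=> [->|_] /=; rewrite ?(negPf wA);
  case: (_ \in S); case: (_ \in A) => //= /(_ isT) H; discriminate.
Qed.

Lemma card_U1 (T : finType) (S : {set T}) (w : T) : w \notin S -> #|w |: S| = #|S|.+1.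
Proof. by move=> h; rewrite cardsU1 h. Qed.

Lemma D1I (T : finType) (U A : {set T}) (w : T) :
  A \subset U -> (U :\ w) :&: A = A :\ w.
Proof.
move=> sAU; apply/setP=> x; rewrite !inE.
move: (subsetP sAU x); case: (x \in A); case: (x \in U); rewrite ?andbT ?andbF //= => /(_ isT) H; discriminate.
Qed.

Lemma card_D1 (T : finType) (A : {set T}) (w : T) : w \in A -> #|A :\ w| = #|A|.-1.
Proof. by move=> h; rewrite (cardsD1 w A) h. Qed.

Lemma J_tri n r (A B C : {set 'I_n}) : 3 <= r -> r + 3 <= n ->
  #|A| = r -> #|B| = r -> #|C| = r ->
  #|A :&: B| = r.-1 -> #|A :&: C| = r.-1 -> #|B :&: C| = r.-1 ->
  exists W : {set 'I_n}, [/\ #|W| = r, #|W :&: A| = r.-1, #|W :&: B| = r.-1 & #|W :&: C| = r.-1].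
Proof.
move=> r3 rn cA cB cC cAB cAC cBC.
have cUAB : #|A :|: B| = r.+1 by rewrite cardsU; lia.
have hI : #|(A :&: C) :|: (B :&: C)| <= r.
  by rewrite -cC; apply: subset_leq_card; apply/subsetP=> x; rewrite !inE; case/orP=> /andP[].
have eI : (A :&: C) :&: (B :&: C) = (A :&: B) :&: C.
  by apply/setP=> x; rewrite !inE; case: (x \in A); case: (x \in B); case: (x \in C).
have cU2 := cardsU (A :&: C) (B :&: C); rewrite eI cAC cBC in cU2.
have eU : (A :&: C) :|: (B :&: C) = (A :|: B) :&: C.
  by apply/setP=> x; rewrite !inE; case: (x \in A); case: (x \in B); case: (x \in C).
have SsubA : A :&: B \subset A by apply: subsetIl.
have SsubB : A :&: B \subset B by apply: subsetIr.
case: (boolP (A :&: B \subset C)) => sSC.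
-
  have cU3 : #|A :|: B :|: C| < n.
    rewrite cardsU cUAB -eU.
    have : #|A :&: C| <= #|(A :&: C) :|: (B :&: C)| by apply: subset_leq_card; apply: subsetUl.
    lia.
  have : exists w, w \notin A :|: B :|: C.
    apply/existsP; rewrite -negb_forall; apply/negP=> /forallP hall.
    have : #|A :|: B :|: C| = n.
      have e : A :|: B :|: C = setT by apply/setP=> x; rewrite [RHS]inE; move: (hall x); rewrite ?negbK.
      by rewrite e cardsT card_ord.
    lia.
  case=> w; rewrite !inE => /norP[/norP[wA wB] wC].
  exists (w |: A :&: B); rewrite !U1I //.
  rewrite card_U1 ?cAB; [by split => //; lia | by rewrite inE (negPf wA)].
- have : exists z, z \in (A :&: B) :\: C.
    apply/set0Pn; apply/negP=> /eqP; move/negP: sSC; rewrite -setD_eq0 => h /eqP; exact: h.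
  case=> z zS.
  have lt : #|(A :&: B) :&: C| < r.-1.
    rewrite -cAB; apply: proper_card; rewrite properE subsetIl /=.
    apply/negP=> /subsetP /(_ z); rewrite !inE in zS *; case/andP: zS => zC /andP[zA zB].
    by rewrite zA zB (negPf zC) => /(_ isT).
  have sCU : C \subset A :|: B.
    have e : (A :|: B) :&: C = C.
      apply/eqP; rewrite eqEcard subsetIr /= -eU cU2 cC; lia.
    by rewrite -e subsetIl.
  have : #|(A :&: B) :&: C| > 0 by lia.
  case/card_gt0P=> w; rewrite !inE => /andP[/andP[wA wB] wC].
  exists ((A :|: B) :\ w).
  rewrite !D1I ?subsetUl ?subsetUr // !card_D1 ?inE ?wA ?wB ?wC ?cA ?cB ?cC ?cUAB //.
Qed.

Lemma bit (T : finType) (X W : {set T}) x1 x2 q : x1 != x2 ->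
  (forall x, (x \in X) = (x == x1) || (x == x2)) -> X :\: W = [set q] ->
  (x1 \in W) != (x2 \in W).
Proof.
move=> n12 hX hq.
have h x : (x \in X) && (x \notin W) = (x == q) by rewrite -in_set1 -hq !inE andbC.
have h1 := h x1; have h2 := h x2; have hqq := h q.
rewrite hX eqxx in h1; rewrite hX eqxx orbT in h2; rewrite hX eqxx in hqq.
case/andP: hqq => /orP [] /eqP eq _; subst q; move: h1 h2;
  rewrite ?eqxx ?(negbTE n12) ?(eq_sym x2 x1) ?(negbTE n12);
  by case: (x1 \in W); case: (x2 \in W).
Qed.

Ltac ts3 x u v w :=
  (case: (x =P u) => [?|_]; first subst x; last (case: (x =P v) => [?|_]; first subst x;
    last (case: (x =P w) => [?|_]; first subst x))); rewrite ?eqxx; try done.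

Lemma TS_tri (T : finType) (e : rel T) : symmetric e -> irreflexive e ->
  forall X Y : {set T}, is_kclique e 2 X -> is_kclique e 2 Y -> ts_adj e X Y ->
  exists Z, [/\ is_kclique e 2 Z, ts_adj e X Z, ts_adj e Y Z &
    forall W, ts_adj e W X -> ts_adj e W Y -> ts_adj e W Z -> False].
Proof.
move=> esym eirr X Y /andP[/eqP cX clX] /andP[/eqP cY clY].
case/existsP=> u /existsP [v /and3P[/eqP hu /eqP hv euv]].
have c1 : #|X :&: Y| == 1.
  have := cardsID Y X; rewrite hu cards1 cX => H; apply/eqP; lia.
case/cards1P: c1 => w hw.
have hX x : (x \in X) = (x == u) || (x == w).
  by rewrite -(setID X Y) hw hu !inE orbC.
have hY x : (x \in Y) = (x == v) || (x == w).
  by rewrite -(setID Y X) setIC hw hv !inE orbC.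
have uY : u \notin Y by have := set11 u; rewrite -hu !inE => /andP[].
have vX : v \notin X by have := set11 v; rewrite -hv !inE => /andP[].
have wX : w \in X by rewrite hX eqxx orbT.
have wY : w \in Y by rewrite hY eqxx orbT.
have uX : u \in X by rewrite hX eqxx.
have vY : v \in Y by rewrite hY eqxx.
have uw : (u == w) = false by apply/negbTE; apply: contraNneq uY => ->.
have vw : (v == w) = false by apply/negbTE; apply: contraNneq vX => ->.
have uv : (u == v) = false by apply/negbTE; apply: contraTneq euv => ->; rewrite eirr.
have wu : (w == u) = false by rewrite eq_sym.
have wv : (w == v) = false by rewrite eq_sym.
have vu : (v == u) = false by rewrite eq_sym.
have ewv : e w v by move/forallP: clY => /(_ w); rewrite wY /= => /forallP /(_ v); rewrite vY wv.
have ewu : e w u by move/forallP: clX => /(_ w); rewrite wX /= => /forallP /(_ u); rewrite uX wu.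
have hZ x : (x \in [set u; v]) = (x == u) || (x == v) by rewrite !inE.
exists [set u; v]; split.
- rewrite /is_kclique cards2 uv /=; apply/forallP=> x; apply/implyP; rewrite hZ => hx.
  apply/forallP=> y; apply/implyP; rewrite hZ => hy; apply/implyP.
  case/orP: hx => /eqP ->; case/orP: hy => /eqP ->; rewrite ?eqxx //= => _;
    by rewrite // esym.
- apply/existsP; exists w; apply/existsP; exists v; rewrite ewv andbT.
  apply/andP; split; apply/eqP/setP=> x; rewrite !inE ?hX ?hZ;
  ts3 x u v w; by rewrite ?eqxx ?uw ?vw ?uv ?wu ?wv ?vu.
- apply/existsP; exists w; apply/existsP; exists u; rewrite ewu andbT.
  apply/andP; split; apply/eqP/setP=> x; rewrite !inE ?hY ?hZ;
  ts3 x u v w; by rewrite ?eqxx ?uw ?vw ?uv ?wu ?wv ?vu.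
- move=> W.
  have g (Z : {set T}) (a b : T) : a != b -> (forall x, (x \in Z) = (x == a) || (x == b)) -> ts_adj e W Z ->
      (a \in W) != (b \in W).
    move=> ab hz /existsP [p /existsP [q /and3P [_ /eqP hq _]]]; exact: bit ab hz hq.
  move=> /(g _ _ _ (negbT uw) hX) h1 /(g _ _ _ (negbT vw) hY) h2 /(g _ _ _ (negbT uv) hZ) h3.
  by move: h1 h2 h3; case: (u \in W); case: (v \in W); case: (w \in W).
Qed.

Lemma exists_out n (A : {set 'I_n}) : #|A| < n -> exists y, y \notin A.
Proof.
move=> h; apply/existsP; rewrite -negb_forall; apply/negP=> /forallP hall.
have e : A = setT by apply/setP=> x; rewrite [RHS]inE; move: (hall x); rewrite ?negbK.
by move: h; rewrite e cardsT card_ord ltnn.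
Qed.

Theorem theorem3p9 (n r : nat) :
  3 <= r -> r <= n - 3 ->
  forall (T : finType) (e : rel T),
    symmetric e -> irreflexive e ->
    ~ graph_iso (fun A : {set T} => is_kclique e 2 A) (ts_adj e)
                (fun A : {set 'I_n} => johnson_vertex r A) (johnson_adj r).
Proof.
move=> r3 rn T e esym eirr [f [fP finj fsurj fadj]].
have le_rn : r <= n by lia.
pose A0 : {set 'I_n} := [set widen_ord le_rn i | i : 'I_r].
have cA0 : #|A0| = r.
  rewrite card_imset ?cardT ?size_enum_ord //.
  by move=> i j /(congr1 val) /= /val_inj.
have [x xA0] : exists x, x \in A0 by apply/card_gt0P; lia.
have [y yA0] : exists y, y \notin A0 by apply: exists_out; lia.
pose B0 := y |: (A0 :\ x).
have sub : A0 :\ x \subset A0 by apply: subsetDl.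
have cB0 : #|B0| = r.
  rewrite card_U1 ?card_D1 ?cA0 //; first lia.
  by rewrite inE negb_and yA0 orbT.
have aAB : #|A0 :&: B0| = r.-1 by rewrite setIC U1I // card_D1 ?cA0.
have [X PX fX] := fsurj A0 (introT eqP cA0).
have [Y PY fY] := fsurj B0 (introT eqP cB0).
have adjXY : ts_adj e X Y by rewrite fadj // fX fY /johnson_adj aAB.
have [Z [PZ aXZ aYZ noW]] := @TS_tri _ _ esym eirr X Y PX PY adjXY.
have /eqP cZ := fP Z PZ.
have /eqP cXZ : johnson_adj r (f X) (f Z) by rewrite -fadj.
have /eqP cYZ : johnson_adj r (f Y) (f Z) by rewrite -fadj.
have [W [cW cWA cWB cWC]] := @J_tri n r (f X) (f Y) (f Z) r3 ltac:(lia)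
  ltac:(by rewrite fX) ltac:(by rewrite fY) cZ ltac:(by rewrite fX fY) cXZ cYZ.
have [W' PW' fW'] := fsurj W (introT eqP cW).
apply: (noW W').
- by rewrite fadj // fW' /johnson_adj cWA.
- by rewrite fadj // fW' /johnson_adj cWB.
- by rewrite fadj // fW' /johnson_adj cWC.
Qed.
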